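(* Let $\mathbb{E}_{a,b,c}=\{(x,y,z): x^2/a^2+y^2/b^2+z^2/c^2=1\}$ be an ellipsoid with $a>b>c>0$. Then $\mathbb{E}_{a,b,c}$ has exactly four umbilic points, located in the plane $y=0$ (the plane of symmetry orthogonal to the middle axis), and each of them is of type $G_1$ for the geometric mean curvature lines and of type $D_1$ for the principal curvature lines.
   Context: An umbilic point is a point where the principal curvatures coincide. At an umbilic point choose a Monge chart $(x,y)\mapsto(x,y,h(x,y))$ centered at it with $h=\frac{k}{2}(x^2+y^2)+\frac{a}{6}x^3+\frac{b}{2}xy^2+\frac{c}{6}y^3+O(4)$ (here $a,b,c,k$ are the local coefficients, not the ellipsoid's axes). The point is of type $G_1$ if $kb(b-a)\neq0$ and $\Delta_G=4c^2(2a-b)^2-[3c^2+(a-5b)^2][3(a-5b)(a-b)+c^2]>0$. It is of type $D_1$ if $b(b-a)\neq0$ and $\Delta_P=4b(a-2b)^3-c^2(a-2b)^2>0$. Geometric mean curvature lines are curves with normal curvature equal to $\sqrt{\mathcal{K}}$, $\mathcal{K}$ the Gaussian curvature. *)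

(* Defs.v *)
From Stdlib Require Import Reals Lra List.
Open Scope R_scope.

Definition V3 : Type := (R * R * R)%type.
Definition vx (p : V3) : R := fst (fst p).
Definition vy (p : V3) : R := snd (fst p).
Definition vz (p : V3) : R := snd p.
Definition mkV (x y z : R) : V3 := (x, y, z).
Definition vadd (u v : V3) : V3 := mkV (vx u + vx v) (vy u + vy v) (vz u + vz v).
Definition vscale (t : R) (v : V3) : V3 := mkV (t * vx v) (t * vy v) (t * vz v).
Definition dot (u v : V3) : R := vx u * vx v + vy u * vy v + vz u * vz v.
Definition vnorm (v : V3) : R := sqrt (dot v v).

Definition ellF (A B C : R) (p : V3) : R :=
  vx p ^ 2 / A ^ 2 + vy p ^ 2 / B ^ 2 + vz p ^ 2 / C ^ 2.
Definition on_ellipsoid (A B C : R) (p : V3) : Prop := ellF A B C p = 1.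

Definition gradF (A B C : R) (p : V3) : V3 :=
  mkV (2 * vx p / A ^ 2) (2 * vy p / B ^ 2) (2 * vz p / C ^ 2).
Definition hessF (A B C : R) (v : V3) : R :=
  2 * (vx v ^ 2 / A ^ 2 + vy v ^ 2 / B ^ 2 + vz v ^ 2 / C ^ 2).

(** Normal curvature of the level surface {F = 1} at p in the tangent
    direction v (unit normal N = grad F / |grad F|):
      k_n(v) = - <D^2F(p) v, v> / (|grad F(p)| |v|^2). *)
Definition normal_curvature (A B C : R) (p v : V3) : R :=
  - hessF A B C v / (vnorm (gradF A B C p) * dot v v).

(** Umbilic point: the principal curvatures (extremal values of the normal
    curvature over tangent directions) coincide, i.e. the normal curvature
    is the same in every tangent direction. *)
Definition umbilic (A B C : R) (p : V3) : Prop :=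
  on_ellipsoid A B C p /\
  exists kappa : R, forall v : V3, v <> mkV 0 0 0 ->
    dot v (gradF A B C p) = 0 -> normal_curvature A B C p v = kappa.

Definition orthonormal3 (e1 e2 n : V3) : Prop :=
  dot e1 e1 = 1 /\ dot e2 e2 = 1 /\ dot n n = 1 /\
  dot e1 e2 = 0 /\ dot e1 n = 0 /\ dot e2 n = 0.

(** Monge chart of the ellipsoid centered at p: in an orthonormal frame
    (e1, e2, n) at p, the surface near p is the graph
    (x,y) |-> p + x e1 + y e2 + h(x,y) n, with
    h = k/2 (x^2+y^2) + a/6 x^3 + b/2 x y^2 + c/6 y^3 + O(4). *)
Definition monge_chart (A B C : R) (p : V3) (k a b c : R) : Prop :=
  exists e1 e2 n : V3, orthonormal3 e1 e2 n /\
  exists (h : R -> R -> R) (delta : R), 0 < delta /\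
    (forall x y, Rabs x < delta -> Rabs y < delta ->
       Rabs (h x y) < delta /\
       on_ellipsoid A B C
         (vadd p (vadd (vscale x e1) (vadd (vscale y e2) (vscale (h x y) n))))) /\
    (forall x y t, Rabs x < delta -> Rabs y < delta -> Rabs t < delta ->
       on_ellipsoid A B C
         (vadd p (vadd (vscale x e1) (vadd (vscale y e2) (vscale t n)))) ->
       t = h x y) /\
    exists K : R, forall x y, Rabs x < delta -> Rabs y < delta ->
      Rabs (h x y - (k / 2 * (x ^ 2 + y ^ 2) + a / 6 * x ^ 3
                     + b / 2 * x * y ^ 2 + c / 6 * y ^ 3))
        <= K * (x ^ 2 + y ^ 2) ^ 2.

Definition DeltaG (a b c : R) : R :=
  4 * c ^ 2 * (2 * a - b) ^ 2
  - (3 * c ^ 2 + (a - 5 * b) ^ 2) * (3 * (a - 5 * b) * (a - b) + c ^ 2).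

Definition DeltaP (a b c : R) : R :=
  4 * b * (a - 2 * b) ^ 3 - c ^ 2 * (a - 2 * b) ^ 2.

Definition type_G1 (A B C : R) (p : V3) : Prop :=
  exists k a b c : R, monge_chart A B C p k a b c /\
    k * b * (b - a) <> 0 /\ DeltaG a b c > 0.

Definition type_D1 (A B C : R) (p : V3) : Prop :=
  exists k a b c : R, monge_chart A B C p k a b c /\
    b * (b - a) <> 0 /\ DeltaP a b c > 0.

(* Main.v *)
Require Import Defs.
From Stdlib Require Import Reals List Lra.
Open Scope R_scope.

Lemma chart_quad (A B C : R) (p e1 e2 n : V3) (G P al L : R) :
  orthonormal3 e1 e2 n -> 0 < G -> 0 <= al -> 0 < L ->
  (forall x y t, ellF A B C (vadd p (vadd (vscale x e1) (vadd (vscale y e2) (vscale t n)))) - 1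
      = al*t^2 + (2*G + 2*P*x)*t + L*(x^2+y^2)) ->
  monge_chart A B C p (-(L/G)) (3*(L*P/G^2)) (L*P/G^2) 0.
Proof.
  intros Hon HG Hal HL Hid.
  exists e1, e2, n. split; [exact Hon|].
  set (M := 1 + Rabs P + al + L).
  pose proof (Rabs_pos P) as HP0.
  assert (HM : 1 <= M) by (unfold M; lra).
  set (d := G/(8*M)).
  assert (Hd : 0 < d) by (unfold d; apply Rdiv_lt_0_compat; lra).
  assert (HdM : d * M = G/8) by (unfold d; field; lra).
  assert (K1 : Rabs P * d <= G/8) by (unfold M in HdM; nra).
  assert (K2 : al * d <= G/8) by (unfold M in HdM; nra).
  assert (K3 : L * d <= G/8) by (unfold M in HdM; nra).
  set (bet := fun x => 2*G + 2*P*x).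
  set (gam := fun x y => L*(x^2+y^2)).
  set (h := fun x y => -(2*gam x y)/(bet x + sqrt (bet x ^2 - 4*al*gam x y))).
  assert (Hpt : forall x y, Rabs x < d -> Rabs y < d ->
     G <= bet x /\ 0 <= gam x y /\ gam x y <= 2*L*d^2 /\
     al * h x y ^2 + bet x * h x y + gam x y = 0 /\ G * Rabs (h x y) <= 2 * gam x y).
  { intros x y Hx Hy.
    apply Rabs_def2 in Hx. apply Rabs_def2 in Hy.
    assert (HPx : Rabs (P*x) <= Rabs P * d).
    { rewrite Rabs_mult. apply Rmult_le_compat_l; [lra|].
      apply Rabs_le; lra. }
    assert (HPx2 : -(P*x) <= Rabs (P*x)) by (rewrite <- Rabs_Ropp; apply Rle_abs).
    assert (Hb : G <= bet x) by (unfold bet; lra).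
    assert (Hg0 : 0 <= gam x y) by (unfold gam; nra).
    assert (Hx2 : x^2 <= d^2) by nra. assert (Hy2 : y^2 <= d^2) by nra.
    assert (Hg1 : gam x y <= 2*L*d^2).
    { unfold gam. assert (L*(x^2+y^2) <= L*(2*d^2)) by (apply Rmult_le_compat_l; lra). lra. }
    set (bx := bet x) in *. set (gx := gam x y) in *.
    assert (Hag : al * gx <= al * (2*L*d^2)) by (apply Rmult_le_compat_l; lra).
    assert (Hald : al*d*(L*d) <= G/8*(G/8)) by (apply Rmult_le_compat; nra).
    assert (Hdisc : 0 <= bx^2 - 4*al*gx) by nra.
    set (S := sqrt (bx^2 - 4*al*gx)).
    assert (HS0 : 0 <= S) by apply sqrt_pos.
    assert (HSS : S*S = bx^2 - 4*al*gx) by (apply sqrt_sqrt; lra).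
    assert (Hhd : h x y = -(2*gx)/(bx+S)) by reflexivity.
    set (hv := h x y) in *.
    assert (Hhm : hv * (bx+S) = -(2*gx)) by (rewrite Hhd; field; lra).
    split; [lra|]. split; [lra|]. split; [lra|]. split.
    - assert (E : (al*hv^2 + bx*hv + gx) * (bx+S)^2 = gx*(4*al*gx - bx^2 + S*S)).
      { assert (E2 : (al*hv^2 + bx*hv + gx) * (bx+S)^2
                = al*(hv*(bx+S))^2 + bx*(hv*(bx+S))*(bx+S) + gx*(bx+S)^2) by ring.
        rewrite E2, Hhm. ring. }
      rewrite HSS in E.
      assert (E3 : (al*hv^2 + bx*hv + gx) * (bx+S)^2 = 0) by (rewrite E; ring).
      apply Rmult_integral in E3. destruct E3 as [E3|E3]; [exact E3|].
      exfalso. assert (0 < (bx+S)^2) by (apply pow_lt; lra). lra.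
    - assert (hv <= 0) by nra.
      rewrite Rabs_left1 by lra. nra. }
  exists h, d. split; [exact Hd|]. split; [|split].
  - intros x y Hx Hy.
    destruct (Hpt x y Hx Hy) as (Hb & Hg0 & Hg1 & Heq & Hhb).
    split.
    + assert (G * Rabs (h x y) < G * d); [|nra].
      assert (d*(L*d) <= d*(G/8)) by (apply Rmult_le_compat_l; lra). nra.
    + unfold on_ellipsoid. pose proof (Hid x y (h x y)). unfold bet, gam in Heq. lra.
  - intros x y t Hx Hy Ht Hon2.
    destruct (Hpt x y Hx Hy) as (Hb & Hg0 & Hg1 & Heq & Hhb).
    unfold on_ellipsoid in Hon2.
    assert (Ht2 : al*t^2 + bet x * t + gam x y = 0).
    { pose proof (Hid x y t) as Hi. rewrite Hon2 in Hi. unfold bet, gam. lra. }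
    assert (Hhd : Rabs (h x y) < d).
    { assert (G * Rabs (h x y) < G * d); [|nra].
      assert (d*(L*d) <= d*(G/8)) by (apply Rmult_le_compat_l; lra). nra. }
    apply Rabs_def2 in Ht. apply Rabs_def2 in Hhd.
    set (hv := h x y) in *.
    assert (F : (t - hv) * (al*(t+hv) + bet x) = 0) by nra.
    apply Rmult_integral in F. destruct F as [F|F]; [lra|].
    exfalso. assert (al*(t+hv) >= -(2*(al*d))) by nra. lra.
  - exists ((4*al*L^2 + L*P^2)/G^3).
    intros x y Hx Hy.
    destruct (Hpt x y Hx Hy) as (Hb & Hg0 & Hg1 & Heq & Hhb).
    set (hv := h x y) in *. set (bx := bet x) in *.
    set (r2 := x^2+y^2).
    set (T := (-(L/G)) / 2 * (x ^ 2 + y ^ 2) + 3*(L*P/G^2) / 6 * x ^ 3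
                     + (L*P/G^2) / 2 * x * y ^ 2 + 0 / 6 * y ^ 3).
    assert (HT : bx * T = - gam x y + L*P^2*x^2*r2/G^2)
      by (unfold bx, bet, T, gam, r2; field; lra).
    assert (HE : G^2 * (bx * (hv - T)) = -(G^2*(al*hv^2)) - L*P^2*x^2*r2).
    { assert (bx*(hv-T) = -(al*hv^2) - L*P^2*x^2*r2/G^2) by lra.
      rewrite H. field. lra. }
    assert (Hgam : gam x y = L * r2) by reflexivity.
    assert (Hh2 : G^2 * hv^2 <= 4*L^2*r2^2).
    { pose proof (Rabs_pos hv). rewrite <- (pow2_abs hv).
      assert (0 <= G * Rabs hv) by nra. nra. }
    assert (Hr : 0 <= x^2 <= r2) by (unfold r2; nra).
    assert (Hab : Rabs (G^2 * (bx * (hv - T))) <= G^3 * ((4*al*L^2 + L*P^2)/G^3) * r2^2).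
    { rewrite HE. replace (G^3 * ((4*al*L^2 + L*P^2)/G^3) * r2^2)
        with (al*(4*L^2*r2^2) + L*P^2*r2*r2) by (field; lra).
      assert (0 <= G^2*(al*hv^2)) by (apply Rmult_le_pos; [nra|]; apply Rmult_le_pos; nra).
      assert (0 <= L*P^2*x^2*r2) by (apply Rmult_le_pos; [|lra]; apply Rmult_le_pos; nra).
      rewrite Rabs_left1 by lra.
      assert (G^2*(al*hv^2) <= al*(4*L^2*r2^2)) by nra.
      assert (L*P^2*x^2*r2 <= L*P^2*r2*r2) by (apply Rmult_le_compat_r; [|apply Rmult_le_compat_l]; nra).
      lra. }
    rewrite !Rabs_mult in Hab.
    rewrite (Rabs_right (G^2)) in Hab by nra.
    rewrite (Rabs_right bx) in Hab by lra.
    fold r2.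
    set (K := (4*al*L^2 + L*P^2)/G^3) in *.
    pose proof (Rabs_pos (hv - T)).
    assert (G^2*(G*Rabs (hv - T)) <= G^2*(bx*Rabs (hv - T))).
    { apply Rmult_le_compat_l; [nra|]. apply Rmult_le_compat_r; lra. }
    assert (G^3 * Rabs (hv - T) <= G^3 * (K * r2^2)) by lra.
    assert (0 < G^3) by (apply pow_lt; lra).
    apply (Rmult_le_reg_l (G^3)); [lra|]. unfold T in H1. unfold r2 in *. exact H1.
Qed.

Definition Uv (A B C : R) := A^2*(A^2-B^2)/(A^2-C^2).
Definition Wv (A B C : R) := C^2*(B^2-C^2)/(A^2-C^2).

Lemma ident (A B C X Z u1 u3 G x y t : R) :
  A <> 0 -> B <> 0 -> C <> 0 ->
  X^2/A^2 + Z^2/C^2 = 1 ->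
  X/A^2*u3 - Z/C^2*u1 = 0 ->
  X/A^2*u1 + Z/C^2*u3 = G ->
  u3^2/A^2 + u1^2/C^2 = 1/B^2 ->
  ellF A B C (vadd (mkV X 0 Z) (vadd (vscale x (mkV u3 0 (-u1)))
     (vadd (vscale y (mkV 0 1 0)) (vscale t (mkV u1 0 u3))))) - 1
  = (u1^2/A^2+u3^2/C^2)*t^2 + (2*G + 2*(u1*u3*(1/A^2-1/C^2))*x)*t + 1/B^2*(x^2+y^2).
Proof.
  intros HA HB HC H0 H1 H2 H3.
  cbv [ellF vadd vscale mkV vx vy vz fst snd].
  assert (E1 : x*(X/A^2*u3 - Z/C^2*u1) = 0) by (rewrite H1; ring).
  assert (E2 : t*(X/A^2*u1 + Z/C^2*u3) = t*G) by (rewrite H2; ring).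
  assert (E3 : x^2*(u3^2/A^2 + u1^2/C^2) = x^2*(1/B^2)) by (rewrite H3; ring).
  assert (Ex : (X + (x * u3 + (y * 0 + t * u1))) ^ 2 / A ^ 2 +
   (0 + (x * 0 + (y * 1 + t * 0))) ^ 2 / B ^ 2 +
   (Z + (x * - u1 + (y * 0 + t * u3))) ^ 2 / C ^ 2 - 1
   = (X^2/A^2 + Z^2/C^2 - 1) + 2*(x*(X/A^2*u3 - Z/C^2*u1)) + 2*(t*(X/A^2*u1 + Z/C^2*u3))
     + x^2*(u3^2/A^2 + u1^2/C^2) + 2*x*t*(u1*u3*(1/A^2-1/C^2)) + t^2*(u1^2/A^2+u3^2/C^2)
     + y^2/B^2) by (field; auto).
  rewrite Ex, E1, E2, E3, H0. field. auto.
Qed.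

Lemma pos_facts (A B C : R) : A > B -> B > C -> C > 0 ->
  0 < A^2-C^2 /\ 0 < A^2-B^2 /\ 0 < B^2-C^2 /\ 0 < Uv A B C /\ 0 < Wv A B C.
Proof.
  intros hab hbc hc.
  assert (h1: 0 < A^2-C^2) by nra. assert (h2 : 0 < A^2-B^2) by nra.
  assert (h3 : 0 < B^2-C^2) by nra.
  repeat split; auto; unfold Uv, Wv; apply Rdiv_lt_0_compat; auto;
  apply Rmult_lt_0_compat; auto; nra.
Qed.

Lemma point_types (A B C X Z : R) : A > B -> B > C -> C > 0 ->
  X^2 = Uv A B C -> Z^2 = Wv A B C ->
  type_G1 A B C (mkV X 0 Z) /\ type_D1 A B C (mkV X 0 Z).
Proof.
  intros hab hbc hc HX HZ.
  destruct (pos_facts A B C hab hbc hc) as (p1 & p2 & p3 & pU & pW).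
  assert (HA : A <> 0) by lra. assert (HB : B <> 0) by lra. assert (HC : C <> 0) by lra.
  assert (X0 : X <> 0) by (intro e; subst; nra).
  assert (Z0 : Z <> 0) by (intro e; subst; nra).
  set (g1 := X/A^2). set (g3 := Z/C^2).
  assert (g10 : g1 <> 0) by (intro e; assert (g1*A^2 = X) by (unfold g1; field; auto); rewrite e in H; lra).
  assert (g30 : g3 <> 0) by (intro e; assert (g3*C^2 = Z) by (unfold g3; field; auto); rewrite e in H; lra).
  assert (Hg1 : g1^2 = Uv A B C / A^4) by (unfold g1; rewrite <- HX; field; auto).
  assert (Hg3 : g3^2 = Wv A B C / C^4) by (unfold g3; rewrite <- HZ; field; auto).
  assert (Sg : 0 < g1^2+g3^2).
  { rewrite Hg1, Hg3. apply Rplus_lt_0_compat; apply Rdiv_lt_0_compat; auto; apply pow_lt; lra. }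
  set (G := sqrt (g1^2+g3^2)).
  assert (HGp : 0 < G) by (apply sqrt_lt_R0; lra).
  assert (HG2 : G^2 = g1^2+g3^2) by (apply pow2_sqrt; lra).
  set (u1 := g1/G). set (u3 := g3/G).
  assert (Hu : u1^2 + u3^2 = 1) by (unfold u1, u3; field_simplify; [rewrite HG2; field|]; lra).
  assert (H0 : X^2/A^2 + Z^2/C^2 = 1) by (rewrite HX, HZ; unfold Uv, Wv; field; lra).
  assert (H1 : X/A^2*u3 - Z/C^2*u1 = 0) by (fold g1 g3; unfold u1, u3; field; lra).
  assert (H2 : X/A^2*u1 + Z/C^2*u3 = G).
  { fold g1 g3; unfold u1, u3.
    replace (g1 * (g1 / G) + g3 * (g3 / G)) with ((g1^2+g3^2)/G) by (field; lra).
    rewrite <- HG2. field. lra. }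
  assert (H3 : u3^2/A^2 + u1^2/C^2 = 1/B^2).
  { unfold u1, u3.
    replace ((g3 / G) ^ 2 / A ^ 2 + (g1 / G) ^ 2 / C ^ 2) with ((g3^2/A^2 + g1^2/C^2)/G^2)
      by (field; lra).
    rewrite HG2, Hg1, Hg3. unfold Uv, Wv. field.
    assert (0 < (A^2-B^2)*C^2) by (apply Rmult_lt_0_compat; nra).
    assert (0 < (B^2-C^2)*A^2) by (apply Rmult_lt_0_compat; nra).
    repeat split; auto; lra. }
  set (P := u1*u3*(1/A^2-1/C^2)).
  set (L := 1/B^2).
  assert (Hch : monge_chart A B C (mkV X 0 Z) (-(L/G)) (3*(L*P/G^2)) (L*P/G^2) 0).
  { apply (chart_quad A B C (mkV X 0 Z) (mkV u3 0 (-u1)) (mkV 0 1 0) (mkV u1 0 u3) G P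
        (u1^2/A^2+u3^2/C^2) L).
    - unfold orthonormal3, dot; cbv [mkV vx vy vz fst snd]. repeat split; lra.
    - exact HGp.
    - assert (0 <= u1^2/A^2) by (apply Rmult_le_pos; [apply pow2_ge_0|left; apply Rinv_0_lt_compat; apply pow_lt; lra]).
      assert (0 <= u3^2/C^2) by (apply Rmult_le_pos; [apply pow2_ge_0|left; apply Rinv_0_lt_compat; apply pow_lt; lra]).
      lra.
    - unfold L; apply Rdiv_lt_0_compat; [lra|apply pow_lt; lra].
    - intros x y t. apply ident; auto. }
  assert (u10 : u1 <> 0) by (intro e; apply g10; replace g1 with (u1*G) by (unfold u1; field; lra); rewrite e; ring).
  assert (u30 : u3 <> 0) by (intro e; apply g30; replace g3 with (u3*G) by (unfold u3; field; lra); rewrite e; ring).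
  assert (P0 : P <> 0).
  { unfold P. assert (1/A^2 - 1/C^2 <> 0).
    { replace (1/A^2 - 1/C^2) with ((C^2-A^2)/(A^2*C^2)) by (field; auto).
      intro e. assert ((C^2-A^2) = (C^2-A^2)/(A^2*C^2) * (A^2*C^2)) by (field; auto).
      rewrite e in H. lra. }
    apply Rmult_integral_contrapositive_currified; [|exact H].
    apply Rmult_integral_contrapositive_currified; assumption. }
  set (q := L*P/G^2) in *.
  assert (q0 : q <> 0).
  { intro e. assert (L*P = q * G^2) by (unfold q; field; lra).
    rewrite e in H. assert (L <> 0) by (unfold L; apply Rgt_not_eq, Rdiv_lt_0_compat; [lra|apply pow_lt; lra]).
    apply (Rmult_integral_contrapositive_currified L P); auto. lra. }
  assert (k0 : -(L/G) <> 0).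
  { assert (0 < L/G) by (unfold L; apply Rdiv_lt_0_compat; [apply Rdiv_lt_0_compat|]; [lra|apply pow_lt; lra|lra]). lra. }
  assert (q2 : 0 < q*q) by (apply (Rsqr_pos_lt q q0)).
  assert (q4 : 0 < q^4) by (replace (q^4) with ((q*q)*(q*q)) by ring; apply Rmult_lt_0_compat; lra).
  split.
  - exists (-(L/G)), (3*q), q, 0. split; [exact Hch|]. split.
    + replace (-(L/G) * q * (q - 3*q)) with ((L/G)*(2*(q*q))) by ring.
      apply Rmult_integral_contrapositive_currified; [lra|]. lra.
    + unfold DeltaG. replace (4 * 0 ^ 2 * (2 * (3 * q) - q) ^ 2 -
        (3 * 0 ^ 2 + (3 * q - 5 * q) ^ 2) * (3 * (3 * q - 5 * q) * (3 * q - q) + 0 ^ 2))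
        with (48 * q^4) by ring. lra.
  - exists (-(L/G)), (3*q), q, 0. split; [exact Hch|]. split.
    + replace (q * (q - 3*q)) with (-(2*(q*q))) by ring. lra.
    + unfold DeltaP. replace (4 * q * (3 * q - 2 * q) ^ 3 - 0 ^ 2 * (3 * q - 2 * q) ^ 2)
        with (4 * q^4) by ring. lra.
Qed.

Lemma sq_eq_k (m k g : R) : g <> 0 -> g^2*m = k*g^2 -> k = m.
Proof.
  intros Hg H. assert (E : (m - k) * g^2 = 0) by lra.
  apply Rmult_integral in E. destruct E as [E|E]; [lra|].
  exfalso. exact (pow_nonzero g 2 Hg E).
Qed.

Lemma alg (m1 m2 m3 k g1 g2 g3: R) : m1 < m2 -> m2 < m3 ->
  (g1 <> 0 \/ g2 <> 0 \/ g3 <> 0) ->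
  (g2 <> 0 \/ g3 <> 0 -> g3^2*m2 + g2^2*m3 = k*(g3^2+g2^2)) ->
  (g1 <> 0 \/ g3 <> 0 -> g3^2*m1 + g1^2*m3 = k*(g3^2+g1^2)) ->
  (g1 <> 0 \/ g2 <> 0 -> g2^2*m1 + g1^2*m2 = k*(g2^2+g1^2)) ->
  g2 = 0 /\ g1 <> 0 /\ g3 <> 0 /\ g3^2*(m1-m2) + g1^2*(m3-m2) = 0.
Proof.
  intros h12 h23 Hg Ea Eb Ec.
  destruct (Req_dec g2 0) as [e2|n2].
  - subst g2.
    destruct (Req_dec g1 0) as [e1|n1].
    + subst g1. destruct Hg as [H|[H|H]]; try (exfalso; now apply H).
      specialize (Ea (or_intror H)). specialize (Eb (or_intror H)).
      assert (k = m2) by (apply (sq_eq_k _ _ g3); auto; lra).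
      assert (k = m1) by (apply (sq_eq_k _ _ g3); auto; lra). lra.
    + specialize (Ec (or_introl n1)).
      assert (k = m2) by (apply (sq_eq_k _ _ g1); auto; lra).
      specialize (Eb (or_introl n1)).
      destruct (Req_dec g3 0) as [e3|n3].
      * subst g3. assert (k = m3) by (apply (sq_eq_k _ _ g1); auto; lra). lra.
      * repeat split; auto. subst k. lra.
  - exfalso. specialize (Ea (or_introl n2)). specialize (Ec (or_intror n2)).
    assert (p2 : 0 < g2^2) by (replace (g2^2) with (g2*g2) by ring; apply (Rsqr_pos_lt g2 n2)).
    assert (0 <= g1^2) by apply pow2_ge_0. assert (0 <= g3^2) by apply pow2_ge_0.
    destruct (Rle_or_lt k m2).
    + assert (0 <= g3^2*(m2-k)) by (apply Rmult_le_pos; lra).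
      assert (0 < g2^2*(m3-k)) by (apply Rmult_lt_0_compat; lra). lra.
    + assert (0 <= g1^2*(k-m2)) by (apply Rmult_le_pos; lra).
      assert (0 < g2^2*(k-m1)) by (apply Rmult_lt_0_compat; lra). lra.
Qed.

Lemma dot_pos (v : V3) : v <> mkV 0 0 0 -> 0 < dot v v.
Proof.
  destruct v as [[v1 v2] v3]. intro Hv. unfold dot; cbv [vx vy vz fst snd].
  destruct (Req_dec v1 0); [destruct (Req_dec v2 0); [destruct (Req_dec v3 0)|]|].
  - subst. exfalso. apply Hv. reflexivity.
  - assert (0 < v3*v3) by (apply (Rsqr_pos_lt v3); auto).
    assert (0 <= v1*v1) by apply Rle_0_sqr. assert (0 <= v2*v2) by apply Rle_0_sqr. lra.
  - assert (0 < v2*v2) by (apply (Rsqr_pos_lt v2); auto).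
    assert (0 <= v1*v1) by apply Rle_0_sqr. assert (0 <= v3*v3) by apply Rle_0_sqr. lra.
  - assert (0 < v1*v1) by (apply (Rsqr_pos_lt v1); auto).
    assert (0 <= v3*v3) by apply Rle_0_sqr. assert (0 <= v2*v2) by apply Rle_0_sqr. lra.
Qed.

Lemma umb_of_point (A B C X Z : R) : A > B -> B > C -> C > 0 ->
  X^2 = Uv A B C -> Z^2 = Wv A B C -> umbilic A B C (mkV X 0 Z).
Proof.
  intros hab hbc hc HX HZ.
  destruct (pos_facts A B C hab hbc hc) as (p1 & p2 & p3 & pU & pW).
  assert (HA : A <> 0) by lra. assert (HB : B <> 0) by lra. assert (HC : C <> 0) by lra.
  assert (X0 : X <> 0) by (intro e; subst; lra).
  split.
  { unfold on_ellipsoid, ellF; cbv [mkV vx vy vz fst snd].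
    rewrite HX, HZ. unfold Uv, Wv. field. lra. }
  set (N := vnorm (gradF A B C (mkV X 0 Z))).
  assert (HN : 0 < N).
  { unfold N, vnorm. apply sqrt_lt_R0. apply dot_pos. intro e.
    apply (f_equal vx) in e. cbv [gradF mkV vx vy vz fst snd] in e. rename e into e1. apply X0.
    replace X with ((2*X/A^2) * (A^2/2)) by (field; auto). rewrite e1. ring. }
  exists (-(2/B^2)/N).
  intros v Hv Ht.
  pose proof (dot_pos v Hv) as Hd.
  destruct v as [[v1 v2] v3].
  unfold dot, gradF in Ht; cbv [mkV vx vy vz fst snd] in Ht.
  unfold normal_curvature. fold N. unfold hessF.
  unfold dot in Hd |- *; cbv [mkV vx vy vz fst snd] in Hd |- *.
  set (g1 := X/A^2). set (g3 := Z/C^2).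
  assert (Htan : v1*g1 + v3*g3 = 0).
  { unfold g1, g3. replace (v1*(X/A^2) + v3*(Z/C^2)) with
      ((v1 * (2 * X / A ^ 2) + v2 * (2 * 0 / B ^ 2) + v3 * (2 * Z / C ^ 2))/2) by (field; auto).
    rewrite Ht. field. }
  set (w1 := 1/A^2 - 1/B^2). set (w3 := 1/C^2 - 1/B^2).
  assert (Hbr : w1*g3^2 + w3*g1^2 = 0).
  { unfold w1, w3, g1, g3.
    replace ((1 / A ^ 2 - 1 / B ^ 2) * (Z / C ^ 2) ^ 2 + (1 / C ^ 2 - 1 / B ^ 2) * (X / A ^ 2) ^ 2)
      with ((1 / A ^ 2 - 1 / B ^ 2) * Z^2 / C^4 + (1 / C ^ 2 - 1 / B ^ 2) * X^2/A^4) by (field; auto).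
    rewrite HX, HZ. unfold Uv, Wv. field. lra. }
  assert (g10 : g1 <> 0) by (intro e; assert (g1*A^2 = X) by (unfold g1; field; auto); rewrite e in H; lra).
  assert (Hq : g1^2*(w1*v1^2 + w3*v3^2) = 0).
  { replace (g1^2*(w1*v1^2 + w3*v3^2)) with
      (v3^2*(w1*g3^2 + w3*g1^2) + w1*(v1*g1 - v3*g3)*(v1*g1+v3*g3)) by ring.
    rewrite Hbr, Htan. ring. }
  apply Rmult_integral in Hq. destruct Hq as [Hq|Hq].
  { exfalso. exact (pow_nonzero g1 2 g10 Hq). }
  assert (Hh : v1^2/A^2 + v2^2/B^2 + v3^2/C^2 = (v1*v1+v2*v2+v3*v3)/B^2).
  { unfold w1, w3 in Hq.
    replace (v1^2/A^2 + v2^2/B^2 + v3^2/C^2) with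
      ((1 / A ^ 2 - 1 / B ^ 2) * v1 ^ 2 + (1 / C ^ 2 - 1 / B ^ 2) * v3 ^ 2 + (v1*v1+v2*v2+v3*v3)/B^2)
      by (field; auto).
    rewrite Hq. ring. }
  rewrite Hh. field. lra.
Qed.

Lemma mkV_neq (a b c : R) : a <> 0 \/ b <> 0 \/ c <> 0 -> mkV a b c <> mkV 0 0 0.
Proof.
  intros H e. unfold mkV in e. injection e. intros. destruct H as [H|[H|H]]; auto.
Qed.

Lemma point_of_umb (A B C : R) (p : V3) : A > B -> B > C -> C > 0 ->
  umbilic A B C p -> vy p = 0 /\ vx p ^ 2 = Uv A B C /\ vz p ^ 2 = Wv A B C.
Proof.
  destruct p as [[X Y] Z]. intros hab hbc hc [Hon [k Hk]].
  destruct (pos_facts A B C hab hbc hc) as (p1 & p2 & p3 & pU & pW).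
  assert (HA : A <> 0) by lra. assert (HB : B <> 0) by lra. assert (HC : C <> 0) by lra.
  unfold on_ellipsoid, ellF in Hon; cbv [vx vy vz fst snd] in Hon |- *.
  set (g1 := X/A^2). set (g2 := Y/B^2). set (g3 := Z/C^2).
  assert (Hg : g1 <> 0 \/ g2 <> 0 \/ g3 <> 0).
  { destruct (Req_dec g1 0) as [e1|]; [|auto]. destruct (Req_dec g2 0) as [e2|]; [|auto].
    destruct (Req_dec g3 0) as [e3|]; [|auto]. exfalso.
    assert (X = g1*A^2) by (unfold g1; field; auto).
    assert (Y = g2*B^2) by (unfold g2; field; auto).
    assert (Z = g3*C^2) by (unfold g3; field; auto).
    rewrite e1 in H. rewrite e2 in H0. rewrite e3 in H1.
    rewrite H, H0, H1 in Hon. field_simplify in Hon; auto. lra. }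
  set (N := vnorm (gradF A B C (X, Y, Z))).
  assert (HN : 0 < N).
  { unfold N, vnorm. apply sqrt_lt_R0. apply dot_pos.
    unfold gradF; cbv [vx vy vz fst snd]. apply mkV_neq.
    destruct Hg as [H|[H|H]]; [left|right;left|right;right]; intro e; apply H.
    - unfold g1. replace (X/A^2) with ((2*X/A^2)/2) by (field; auto). rewrite e. field.
    - unfold g2. replace (Y/B^2) with ((2*Y/B^2)/2) by (field; auto). rewrite e. field.
    - unfold g3. replace (Z/C^2) with ((2*Z/C^2)/2) by (field; auto). rewrite e. field. }
  set (kk := -(k*N)/2).
  assert (Hq : forall v1 v2 v3, v1 <> 0 \/ v2 <> 0 \/ v3 <> 0 ->
     v1*g1 + v2*g2 + v3*g3 = 0 ->
     v1^2*(1/A^2) + v2^2*(1/B^2) + v3^2*(1/C^2) = kk*(v1^2+v2^2+v3^2)).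
  { intros v1 v2 v3 Hv Ht.
    pose proof (mkV_neq _ _ _ Hv) as Hv'.
    pose proof (dot_pos _ Hv') as Hd.
    assert (Ht' : dot (mkV v1 v2 v3) (gradF A B C (X, Y, Z)) = 0).
    { unfold dot, gradF; cbv [mkV vx vy vz fst snd].
      replace (v1 * (2 * X / A ^ 2) + v2 * (2 * Y / B ^ 2) + v3 * (2 * Z / C ^ 2))
        with (2*(v1*g1 + v2*g2 + v3*g3)) by (unfold g1, g2, g3; field; auto).
      rewrite Ht. ring. }
    specialize (Hk _ Hv' Ht'). unfold normal_curvature in Hk. fold N in Hk.
    unfold hessF, dot in Hk, Hd; cbv [mkV vx vy vz fst snd] in Hk, Hd.
    unfold kk. rewrite <- Hk. field. split; lra. }
  assert (m12 : 1/A^2 < 1/B^2).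
  { unfold Rdiv. rewrite !Rmult_1_l. apply Rinv_lt_contravar; [apply Rmult_lt_0_compat; apply pow_lt|]; nra. }
  assert (m23 : 1/B^2 < 1/C^2).
  { unfold Rdiv. rewrite !Rmult_1_l. apply Rinv_lt_contravar; [apply Rmult_lt_0_compat; apply pow_lt|]; nra. }
  destruct (alg (1/A^2) (1/B^2) (1/C^2) kk g1 g2 g3 m12 m23 Hg) as (e2 & n1 & n3 & Rel).
  - intros H. pose proof (Hq 0 g3 (-g2)) as Q.
    assert (Q' : 0 ^ 2 * (1 / A ^ 2) + g3 ^ 2 * (1 / B ^ 2) + (- g2) ^ 2 * (1 / C ^ 2) =
        kk * (0 ^ 2 + g3 ^ 2 + (- g2) ^ 2)).
    { apply Q; [|ring]. destruct H as [H|H]; [right;right; intro e; apply H; lra|right;left; exact H]. }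
    lra.
  - intros H. pose proof (Hq (-g3) 0 g1) as Q.
    assert (Q' : (-g3) ^ 2 * (1 / A ^ 2) + 0 ^ 2 * (1 / B ^ 2) + g1 ^ 2 * (1 / C ^ 2) =
        kk * ((-g3) ^ 2 + 0 ^ 2 + g1 ^ 2)).
    { apply Q; [|ring]. destruct H as [H|H]; [right;right; exact H|left; intro e; apply H; lra]. }
    lra.
  - intros H. pose proof (Hq g2 (-g1) 0) as Q.
    assert (Q' : g2 ^ 2 * (1 / A ^ 2) + (-g1) ^ 2 * (1 / B ^ 2) + 0 ^ 2 * (1 / C ^ 2) =
        kk * (g2 ^ 2 + (-g1) ^ 2 + 0 ^ 2)).
    { apply Q; [|ring]. destruct H as [H|H]; [right;left; intro e; apply H; lra|left; exact H]. }
    lra.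
  - assert (HY : Y = 0) by (replace Y with (g2*B^2) by (unfold g2; field; auto); rewrite e2; ring).
    subst Y.
    assert (Rel' : Z^2/C^4*(1/A^2-1/B^2) + X^2/A^4*(1/C^2-1/B^2) = 0).
    { rewrite <- Rel. unfold g1, g3. field. auto. }
    assert (Ell : X^2/A^2 + Z^2/C^2 = 1) by (replace (0^2/B^2) with 0 in Hon by (field; auto); lra).
    split; [reflexivity|]. split.
    + assert (E : (1/A^2)*(1/B^2)*(1/C^2 - 1/A^2)*(X^2 - Uv A B C)
            = (Z^2/C^4*(1/A^2-1/B^2) + X^2/A^4*(1/C^2-1/B^2))
              - (1/A^2 - 1/B^2)*(1/C^2)*((X^2/A^2 + Z^2/C^2) - 1)).
      { unfold Uv. field. lra. }
      rewrite Rel', Ell in E.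
      assert (Ec : (1/A^2)*(1/B^2)*(1/C^2 - 1/A^2) <> 0).
      { assert (0 < 1/A^2) by (apply Rdiv_lt_0_compat; [lra|apply pow_lt; lra]).
        assert (0 < 1/B^2) by (apply Rdiv_lt_0_compat; [lra|apply pow_lt; lra]).
        apply Rgt_not_eq. apply Rmult_lt_0_compat; [apply Rmult_lt_0_compat|]; lra. }
      assert (E' : (1/A^2)*(1/B^2)*(1/C^2 - 1/A^2)*(X^2 - Uv A B C) = 0) by (rewrite E; ring).
      apply Rmult_integral in E'. destruct E'; [contradiction|lra].
    + assert (E : (1/B^2)*(1/C^2)*(1/C^2 - 1/A^2)*(Z^2 - Wv A B C)
            = -((Z^2/C^4*(1/A^2-1/B^2) + X^2/A^4*(1/C^2-1/B^2))
              - (1/C^2 - 1/B^2)*(1/A^2)*((X^2/A^2 + Z^2/C^2) - 1))).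
      { unfold Wv. field. lra. }
      rewrite Rel', Ell in E.
      assert (Ec : (1/B^2)*(1/C^2)*(1/C^2 - 1/A^2) <> 0).
      { assert (0 < 1/C^2) by (apply Rdiv_lt_0_compat; [lra|apply pow_lt; lra]).
        assert (0 < 1/B^2) by (apply Rdiv_lt_0_compat; [lra|apply pow_lt; lra]).
        apply Rgt_not_eq. apply Rmult_lt_0_compat; [apply Rmult_lt_0_compat|]; lra. }
      assert (E' : (1/B^2)*(1/C^2)*(1/C^2 - 1/A^2)*(Z^2 - Wv A B C) = 0) by (rewrite E; ring).
      apply Rmult_integral in E'. destruct E'; [contradiction|lra].
Qed.

Lemma sq_cases (X x0 : R) : X^2 = x0^2 -> X = x0 \/ X = -x0.
Proof.
  intro H. assert (E : (X - x0)*(X + x0) = 0) by (replace ((X-x0)*(X+x0)) with (X^2 - x0^2) by ring; lra).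
  apply Rmult_integral in E. destruct E; [left|right]; lra.
Qed.

Theorem proposition7 (a b c : R) (hab : a > b) (hbc : b > c) (hc : c > 0) :
  exists p1 p2 p3 p4 : V3,
    NoDup (p1 :: p2 :: p3 :: p4 :: nil) /\
    (forall p : V3, umbilic a b c p <-> In p (p1 :: p2 :: p3 :: p4 :: nil)) /\
    Forall (fun p => vy p = 0 /\ type_G1 a b c p /\ type_D1 a b c p)
      (p1 :: p2 :: p3 :: p4 :: nil).
Proof.
  destruct (pos_facts a b c hab hbc hc) as (p1 & p2 & p3 & pU & pW).
  set (x0 := sqrt (Uv a b c)). set (z0 := sqrt (Wv a b c)).
  assert (hx : 0 < x0) by (apply sqrt_lt_R0; lra).
  assert (hz : 0 < z0) by (apply sqrt_lt_R0; lra).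
  assert (Hx : x0^2 = Uv a b c) by (apply pow2_sqrt; lra).
  assert (Hz : z0^2 = Wv a b c) by (apply pow2_sqrt; lra).
  assert (Hx' : (-x0)^2 = Uv a b c) by (rewrite <- Hx; ring).
  assert (Hz' : (-z0)^2 = Wv a b c) by (rewrite <- Hz; ring).
  exists (mkV x0 0 z0), (mkV x0 0 (-z0)), (mkV (-x0) 0 z0), (mkV (-x0) 0 (-z0)).
  split; [|split].
  - unfold mkV.
    repeat constructor; simpl; intro H;
      repeat (destruct H as [H|H]; [injection H; intros; lra|]); exact H.
  - intros [[X Y] Z]. split.
    + intro Hu. destruct (point_of_umb a b c _ hab hbc hc Hu) as (eY & eX & eZ).
      cbv [vx vy vz fst snd] in eY, eX, eZ. subst Y.
      rewrite <- Hx in eX. rewrite <- Hz in eZ.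
      destruct (sq_cases _ _ eX); destruct (sq_cases _ _ eZ); subst; unfold mkV; simpl; tauto.
    + simpl. intros [H|[H|[H|[H|[]]]]]; rewrite <- H; apply umb_of_point; auto.
  - repeat constructor; try reflexivity;
      try (apply point_types; auto); apply point_types; auto.
Qed.
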